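(* Let $Z$ be an abelian group, $K$ a group, and $\theta:K\times K\to Z$ a loop cocycle such that $K\ltimes_\theta Z$ is a commutative A-loop. Let $\mu:K\times K\to Z$ be a group cocycle with $\mu(x,y)=\mu(y,x)$ for all $x,y\in K$. Then $K\ltimes_{\mu\theta}Z$ (where $(\mu\theta)(x,y)=\mu(x,y)\theta(x,y)$) is a commutative A-loop, and its left inner mappings $w\mapsto (uv)\backslash(u(vw))$ coincide with those of $K\ltimes_\theta Z$.
   Context: A loop cocycle is a map $\theta:K\times K\to Z$ with $\theta(x,1)=\theta(1,x)=1$ for all $x\in K$; a group cocycle additionally satisfies $\theta(x,y)\theta(xy,z)=\theta(y,z)\theta(x,yz)$. $K\ltimes_\theta Z$ is the loop on $K\times Z$ with $(x,a)(y,b)=(xy,\,ab\,\theta(x,y))$. An A-loop is a loop all of whose inner mappings (elements of the group generated by $L_{x,y}=L_{yx}^{-1}L_yL_x$, $R_{x,y}=R_{xy}^{-1}R_yR_x$, $T_x=L_x^{-1}R_x$) are automorphisms. *)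

(* Defs.v *)
(* plain types with explicit operations (groups may be infinite). *)
Set Implicit Arguments.

Record is_group (G : Type) (mul : G -> G -> G) (e : G) (inv : G -> G) : Prop := {
  g_assoc : forall x y z, mul x (mul y z) = mul (mul x y) z;
  g_mul1 : forall x, mul e x = x;
  g_mulr1 : forall x, mul x e = x;
  g_invl : forall x, mul (inv x) x = e;
  g_invr : forall x, mul x (inv x) = e }.

Definition is_abelian_group (G : Type) (mul : G -> G -> G) (e : G) (inv : G -> G) : Prop :=
  is_group mul e inv /\ forall x y, mul x y = mul y x.

Definition loop_cocycle (K Z : Type) (eK : K) (eZ : Z) (th : K -> K -> Z) : Prop :=
  forall x, th x eK = eZ /\ th eK x = eZ.

Definition group_cocycle (K Z : Type) (mulK : K -> K -> K) (mulZ : Z -> Z -> Z)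
  (eK : K) (eZ : Z) (th : K -> K -> Z) : Prop :=
  loop_cocycle eK eZ th /\
  forall x y z, mulZ (th x y) (th (mulK x y) z) = mulZ (th y z) (th x (mulK y z)).

Definition cocycle_mul (K Z : Type) (mulZ : Z -> Z -> Z) (mu th : K -> K -> Z) : K -> K -> Z :=
  fun x y => mulZ (mu x y) (th x y).

Definition sd_mul (K Z : Type) (mulK : K -> K -> K) (mulZ : Z -> Z -> Z)
  (th : K -> K -> Z) (p q : K * Z) : K * Z :=
  (mulK (fst p) (fst q), mulZ (mulZ (snd p) (snd q)) (th (fst p) (fst q))).

Definition sd_ldiv (K Z : Type) (mulK : K -> K -> K) (invK : K -> K)
  (mulZ : Z -> Z -> Z) (invZ : Z -> Z) (th : K -> K -> Z) (p r : K * Z) : K * Z :=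
  let y := mulK (invK (fst p)) (fst r) in
  (y, mulZ (mulZ (snd r) (invZ (snd p))) (invZ (th (fst p) y))).

Definition sd_rdiv (K Z : Type) (mulK : K -> K -> K) (invK : K -> K)
  (mulZ : Z -> Z -> Z) (invZ : Z -> Z) (th : K -> K -> Z) (r q : K * Z) : K * Z :=
  let x := mulK (fst r) (invK (fst q)) in
  (x, mulZ (mulZ (snd r) (invZ (snd q))) (invZ (th x (fst q)))).

Record is_loop (Q : Type) (mul ldiv rdiv : Q -> Q -> Q) (e : Q) : Prop := {
  l_mul1 : forall x, mul e x = x;
  l_mulr1 : forall x, mul x e = x;
  l_mulK : forall x y, mul x (ldiv x y) = y;
  l_ldivK : forall x y, ldiv x (mul x y) = y;
  l_rdivK : forall x y, mul (rdiv y x) x = y;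
  l_mulrK : forall x y, rdiv (mul y x) x = y }.

(* Inner mappings, maps composed right-to-left (f g = f o g):
   L_{x,y} = L_{yx}^{-1} L_y L_x : w |-> (yx)\(y(xw))
   R_{x,y} = R_{xy}^{-1} R_y R_x : w |-> ((wx)y)/(xy)
   T_x     = L_x^{-1} R_x        : w |-> x\(wx)            *)
Definition Lmap (Q : Type) (mul ldiv : Q -> Q -> Q) (x y : Q) : Q -> Q :=
  fun w => ldiv (mul y x) (mul y (mul x w)).
Definition Rmap (Q : Type) (mul rdiv : Q -> Q -> Q) (x y : Q) : Q -> Q :=
  fun w => rdiv (mul (mul w x) y) (mul x y).
Definition Tmap (Q : Type) (mul ldiv : Q -> Q -> Q) (x : Q) : Q -> Q :=
  fun w => ldiv x (mul w x).

(* the inner mapping group: the subgroup of Sym(Q) generated by these maps *)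
Inductive inner_map (Q : Type) (mul ldiv rdiv : Q -> Q -> Q) : (Q -> Q) -> Prop :=
| im_L x y : inner_map mul ldiv rdiv (Lmap mul ldiv x y)
| im_R x y : inner_map mul ldiv rdiv (Rmap mul rdiv x y)
| im_T x : inner_map mul ldiv rdiv (Tmap mul ldiv x)
| im_id : inner_map mul ldiv rdiv (fun w => w)
| im_comp f g : inner_map mul ldiv rdiv f -> inner_map mul ldiv rdiv g ->
    inner_map mul ldiv rdiv (fun w => f (g w))
| im_inv f g : inner_map mul ldiv rdiv f ->
    (forall w, g (f w) = w) -> (forall w, f (g w) = w) -> inner_map mul ldiv rdiv g
| im_ext f g : inner_map mul ldiv rdiv f -> (forall w, g w = f w) ->
    inner_map mul ldiv rdiv g.

Definition is_automorphism (Q : Type) (mul : Q -> Q -> Q) (f : Q -> Q) : Prop :=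
  (exists g : Q -> Q, (forall x, g (f x) = x) /\ (forall x, f (g x) = x)) /\
  (forall x y, f (mul x y) = mul (f x) (f y)).

Definition A_loop (Q : Type) (mul ldiv rdiv : Q -> Q -> Q) (e : Q) : Prop :=
  is_loop mul ldiv rdiv e /\
  forall f, inner_map mul ldiv rdiv f -> is_automorphism mul f.

Definition commutative_A_loop (Q : Type) (mul ldiv rdiv : Q -> Q -> Q) (e : Q) : Prop :=
  A_loop mul ldiv rdiv e /\ forall x y, mul x y = mul y x.

(* Main.v *)
From Stdlib Require Import Setoid.
Require Import Defs.

Section AbG.
Context {G : Type} {mul : G -> G -> G} {e : G} {inv : G -> G}.
Hypothesis H : is_abelian_group mul e inv.

Lemma ag_assocR x y z : mul (mul x y) z = mul x (mul y z).
Proof. destruct H as [[A _ _ _ _] _]. now rewrite A. Qed.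
Lemma ag_comm x y : mul x y = mul y x.
Proof. destruct H as [_ C]. apply C. Qed.
Lemma ag_mul1 x : mul e x = x.
Proof. destruct H as [[_ B _ _ _] _]. apply B. Qed.
Lemma ag_mulr1 x : mul x e = x.
Proof. destruct H as [[_ _ B _ _] _]. apply B. Qed.
Lemma ag_invl x : mul (inv x) x = e.
Proof. destruct H as [[_ _ _ B _] _]. apply B. Qed.
Lemma ag_invr x : mul x (inv x) = e.
Proof. destruct H as [[_ _ _ _ B] _]. apply B. Qed.
Lemma ag_cancl a x y : mul a x = mul a y -> x = y.
Proof. intro E. rewrite <- (ag_mul1 x), <- (ag_mul1 y), <- (ag_invl a), !ag_assocR, E. reflexivity. Qed.
Lemma ag_inv_uniq x y : mul x y = e -> y = inv x.
Proof. intro E. apply (ag_cancl x). now rewrite E, ag_invr. Qed.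
Lemma ag_invK x : inv (inv x) = x.
Proof. symmetry. apply ag_inv_uniq. apply ag_invl. Qed.
Lemma ag_inv1 : inv e = e.
Proof. symmetry. apply ag_inv_uniq. apply ag_mul1. Qed.
Lemma ag_invM x y : inv (mul x y) = mul (inv x) (inv y).
Proof. symmetry. apply ag_inv_uniq.
  rewrite (ag_comm (inv x)), ag_assocR, <- (ag_assocR y), ag_invr, ag_mul1, ag_invr. reflexivity. Qed.
Lemma ag_to_one L R : mul L (inv R) = e -> L = R.
Proof. intro E. transitivity (mul (mul L (inv R)) R).
  - rewrite ag_assocR, ag_invl, ag_mulr1. reflexivity.
  - rewrite E. apply ag_mul1. Qed.
Lemma ag_pull_here p : p = mul p e.
Proof. now rewrite ag_mulr1. Qed.
Lemma ag_pull_step a {T' p T''} : T' = mul p T'' -> mul a T' = mul p (mul a T'').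
Proof. intro E. rewrite E, <- !ag_assocR, (ag_comm a p). reflexivity. Qed.
Lemma ag_canc1 h {T T''} : T = mul (inv h) T'' -> T'' = e -> mul h T = e.
Proof. intros E1 E2. rewrite E1, E2, ag_mulr1. apply ag_invr. Qed.
Lemma ag_canc2 a {T T''} : T = mul a T'' -> T'' = e -> mul (inv a) T = e.
Proof. intros E1 E2. rewrite E1, E2, ag_mulr1. apply ag_invl. Qed.
Lemma ag_use_eq L R X Y : L = R -> mul X R = mul Y L -> X = Y.
Proof. intros E1 E2. rewrite E1 in E2. rewrite (ag_comm X), (ag_comm Y) in E2. exact (ag_cancl _ _ _ E2). Qed.
End AbG.

Ltac ag_pull HZ mul p T :=
  lazymatch T with
  | mul p ?T' => let ty := type of T in constr:(@eq_refl ty T)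
  | mul ?a ?T' => let E := ag_pull HZ mul p T' in constr:(ag_pull_step HZ a E)
  | p => constr:(ag_pull_here HZ p)
  end.

Ltac ag_flat HZ :=
  repeat progress rewrite ?(ag_assocR HZ), ?(ag_invM HZ), ?(ag_invK HZ), ?(ag_inv1 HZ),
     ?(ag_mul1 HZ), ?(ag_mulr1 HZ).

Ltac ag_solve HZ mul inv :=
  apply (ag_to_one HZ); ag_flat HZ;
  repeat match goal with
  | |- mul ?h ?T = _ =>
      first [ let E := ag_pull HZ mul (inv h) T in apply (ag_canc1 HZ h E)
            | lazymatch h with inv ?a =>
                let E := ag_pull HZ mul a T in apply (ag_canc2 HZ a E) end ]
  end; reflexivity.


Section Main.
Variables (K Z : Type) (mulK : K -> K -> K) (eK : K) (invK : K -> K)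
  (mulZ : Z -> Z -> Z) (eZ : Z) (invZ : Z -> Z).
Hypothesis HK : is_group mulK eK invK.
Hypothesis HZ : is_abelian_group mulZ eZ invZ.

Lemma Kl1 x y : mulK (invK x) (mulK x y) = y.
Proof. destruct HK as [A B C D E]. rewrite A, D, B. reflexivity. Qed.
Lemma Kl2 x y : mulK x (mulK (invK x) y) = y.
Proof. destruct HK as [A B C D E]. rewrite A, E, B. reflexivity. Qed.
Lemma Kr1 a b : mulK (mulK a (invK b)) b = a.
Proof. destruct HK as [A B C D E]. rewrite <- A, D, C. reflexivity. Qed.
Lemma Kr2 a b : mulK (mulK a b) (invK b) = a.
Proof. destruct HK as [A B C D E]. rewrite <- A, E, C. reflexivity. Qed.

Ltac zs := ag_solve HZ mulZ invZ.

Lemma sd_loop th : loop_cocycle eK eZ th ->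
  is_loop (sd_mul mulK mulZ th) (sd_ldiv mulK invK mulZ invZ th)
    (sd_rdiv mulK invK mulZ invZ th) (eK, eZ).
Proof.
  intro Hth. destruct HK as [A B C D E].
  split; intros [x a]; try intros [y b]; unfold sd_mul, sd_ldiv, sd_rdiv; simpl.
  - rewrite B. destruct (Hth x) as [_ ->]. f_equal. zs.
  - rewrite C. destruct (Hth x) as [-> _]. f_equal. zs.
  - rewrite Kl2. f_equal. zs.
  - rewrite Kl1. f_equal. zs.
  - rewrite Kr1. f_equal. zs.
  - rewrite Kr2. f_equal. zs.
Qed.

Lemma loop_comm_div (Q : Type) (mul ldiv rdiv : Q -> Q -> Q) (e : Q) :
  is_loop mul ldiv rdiv e -> (forall x y, mul x y = mul y x) ->
  forall x y, rdiv y x = ldiv x y.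
Proof.
  intros L C x y. transitivity (ldiv x (mul x (rdiv y x))). { symmetry. apply (l_ldivK L). } rewrite (C x (rdiv y x)), (l_rdivK L). reflexivity.
Qed.

Variable theta : K -> K -> Z.
Hypothesis Htheta : loop_cocycle eK eZ theta.
Variable mu : K -> K -> Z.
Hypothesis Hmu : group_cocycle mulK mulZ eK eZ mu.
Hypothesis Hsym : forall x y, mu x y = mu y x.
Hypothesis HA : commutative_A_loop (sd_mul mulK mulZ theta)
          (sd_ldiv mulK invK mulZ invZ theta) (sd_rdiv mulK invK mulZ invZ theta) (eK, eZ).

Let th' := cocycle_mul mulZ mu theta.
Let m0 := sd_mul mulK mulZ theta.
Let l0 := sd_ldiv mulK invK mulZ invZ theta.
Let r0 := sd_rdiv mulK invK mulZ invZ theta.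
Let m1 := sd_mul mulK mulZ th'.
Let l1 := sd_ldiv mulK invK mulZ invZ th'.
Let r1 := sd_rdiv mulK invK mulZ invZ th'.

Lemma Kcomm x y : mulK x y = mulK y x.
Proof. destruct HA as [_ C]. exact (f_equal fst (C (x, eZ) (y, eZ))). Qed.

Lemma th_sym x y : theta x y = theta y x.
Proof. destruct HA as [_ C]. pose proof (f_equal snd (C (x, eZ) (y, eZ))) as E.
  simpl in E. rewrite !(ag_mul1 HZ) in E. exact E. Qed.

Lemma th'_coc : loop_cocycle eK eZ th'.
Proof. intro x. unfold th', cocycle_mul. destruct Hmu as [Hm _].
  destruct (Hm x) as [-> ->]. destruct (Htheta x) as [-> ->]. rewrite (ag_mul1 HZ). auto. Qed.

Lemma loop1 : is_loop m1 l1 r1 (eK, eZ).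
Proof. apply sd_loop. apply th'_coc. Qed.

Lemma comm1 x y : m1 x y = m1 y x.
Proof. destruct x as [x a], y as [y b]. unfold m1, sd_mul, th', cocycle_mul; simpl.
  rewrite (Kcomm x y), (Hsym x y), (th_sym x y). f_equal. zs. Qed.

Lemma Kassoc_l x y z : mulK (invK (mulK x y)) (mulK x (mulK y z)) = z.
Proof. destruct HK as [A _ _ _ _]. rewrite (A x y z). apply Kl1. Qed.

Lemma Lsame u v w : l1 (m1 u v) (m1 u (m1 v w)) = l0 (m0 u v) (m0 u (m0 v w)).
Proof.
  destruct u as [x a], v as [y b], w as [z c].
  unfold l1, m1, l0, m0, sd_mul, sd_ldiv, th', cocycle_mul; simpl.
  rewrite !Kassoc_l. f_equal.
  destruct Hmu as [_ Hc].
  assert (E : mu y z = mulZ (mulZ (mu x y) (mu (mulK x y) z)) (invZ (mu x (mulK y z)))).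
  { rewrite (Hc x y z). zs. }
  rewrite E. zs.
Qed.

Lemma Kassoc_r x y z : mulK (mulK (mulK z x) y) (invK (mulK x y)) = z.
Proof. destruct HK as [A _ _ _ _]. rewrite <- (A z x y). apply Kr2. Qed.

Definition Pform (f : K * Z -> K * Z) :=
  exists g : K -> Z, forall z c, f (z, c) = (z, mulZ c (g z)).

Lemma inner0_P f : inner_map m0 l0 r0 f -> Pform f.
Proof.
  induction 1 as [x y|x y|x| |f g _ [gf Hf] _ [gg Hg]|f g _ [gf Hf] H1 H2|f g _ [gf Hf] He].
  - exists (fun z => snd (Lmap m0 l0 x y (z, eZ))). intros z c.
    destruct x as [x a], y as [y b]. unfold Lmap, l0, m0, sd_ldiv, sd_mul; simpl.
    rewrite !Kassoc_l. f_equal. zs.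
  - exists (fun z => snd (Rmap m0 r0 x y (z, eZ))). intros z c.
    destruct x as [x a], y as [y b]. unfold Rmap, r0, m0, sd_rdiv, sd_mul; simpl.
    rewrite !Kassoc_r. f_equal. zs.
  - exists (fun z => snd (Tmap m0 l0 x (z, eZ))). intros z c.
    destruct x as [x a]. unfold Tmap, l0, m0, sd_ldiv, sd_mul; simpl.
    rewrite !(Kcomm z x), !Kl1. f_equal. zs.
  - exists (fun _ => eZ). intros z c. rewrite (ag_mulr1 HZ). reflexivity.
  - exists (fun z => mulZ (gg z) (gf z)). intros z c. rewrite Hg, Hf. f_equal. zs.
  - exists (fun z => invZ (gf z)). intros z c.
    destruct (g (z, c)) as [z' c'] eqn:Eg.
    pose proof (H2 (z, c)) as E. rewrite Eg, Hf in E. injection E as -> E.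
    f_equal. rewrite <- E. zs.
  - exists gf. intros z c. rewrite He. apply Hf.
Qed.

Lemma inner1_0 f : inner_map m1 l1 r1 f -> inner_map m0 l0 r0 f.
Proof.
  induction 1 as [x y|x y|x| |f g _ IHf _ IHg|f g _ IHf H1 H2|f g _ IHf He].
  - apply (im_ext _ (im_L m0 l0 r0 x y)). intro w. unfold Lmap. apply Lsame.
  - apply (im_ext _ (im_L m0 l0 r0 x y)). intro w. unfold Rmap, Lmap.
    rewrite (loop_comm_div _ _ _ _ _ loop1 comm1).
    rewrite (comm1 x y), (comm1 (m1 w x) y), (comm1 w x). apply Lsame.
  - apply (im_ext _ (im_id m0 l0 r0)). intro w. unfold Tmap.
    rewrite (comm1 w x). apply (l_ldivK loop1).
  - apply im_id.
  - apply im_comp; assumption.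
  - exact (im_inv _ IHf H1 H2).
  - exact (im_ext _ IHf He).
Qed.

Lemma aut_transfer f : Pform f -> is_automorphism m0 f -> is_automorphism m1 f.
Proof.
  intros [g Hg] [Hb Hh]. split; [exact Hb|].
  assert (Hgh : forall x y, g (mulK x y) = mulZ (g x) (g y)).
  { intros x y. pose proof (Hh (x, eZ) (y, eZ)) as H.
    unfold m0, sd_mul in H; simpl in H. rewrite !Hg in H. simpl in H.
    apply (f_equal snd) in H; simpl in H.
    apply (ag_use_eq HZ _ _ _ _ H). zs. }
  intros [x a] [y b]. unfold m1, sd_mul, th', cocycle_mul. simpl. rewrite !Hg. simpl.
  rewrite Hgh. f_equal. zs.
Qed.

Theorem main_res :
  commutative_A_loop m1 l1 r1 (eK, eZ)
  /\ forall u v w : K * Z, l1 (m1 u v) (m1 u (m1 v w)) = l0 (m0 u v) (m0 u (m0 v w)).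
Proof.
  split; [|exact Lsame].
  split; [|exact comm1].
  split; [exact loop1|].
  intros f Hf. apply aut_transfer.
  - apply inner0_P, inner1_0, Hf.
  - destruct HA as [[_ Ha] _]. apply Ha, inner1_0, Hf.
Qed.

End Main.
Theorem lemma4p11 (K Z : Type)
  (mulK : K -> K -> K) (eK : K) (invK : K -> K)
  (mulZ : Z -> Z -> Z) (eZ : Z) (invZ : Z -> Z)
  (HK : is_group mulK eK invK) (HZ : is_abelian_group mulZ eZ invZ)
  (theta : K -> K -> Z) (Htheta : loop_cocycle eK eZ theta)
  (HA : commutative_A_loop (sd_mul mulK mulZ theta)
          (sd_ldiv mulK invK mulZ invZ theta) (sd_rdiv mulK invK mulZ invZ theta) (eK, eZ))
  (mu : K -> K -> Z) (Hmu : group_cocycle mulK mulZ eK eZ mu)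
  (Hsym : forall x y, mu x y = mu y x) :
  commutative_A_loop (sd_mul mulK mulZ (cocycle_mul mulZ mu theta))
    (sd_ldiv mulK invK mulZ invZ (cocycle_mul mulZ mu theta))
    (sd_rdiv mulK invK mulZ invZ (cocycle_mul mulZ mu theta)) (eK, eZ)
  /\ forall u v w : K * Z,
    sd_ldiv mulK invK mulZ invZ (cocycle_mul mulZ mu theta)
      (sd_mul mulK mulZ (cocycle_mul mulZ mu theta) u v)
      (sd_mul mulK mulZ (cocycle_mul mulZ mu theta) u
         (sd_mul mulK mulZ (cocycle_mul mulZ mu theta) v w))
    = sd_ldiv mulK invK mulZ invZ theta
      (sd_mul mulK mulZ theta u v)
      (sd_mul mulK mulZ theta u (sd_mul mulK mulZ theta v w)).
Proof. apply main_res; assumption. Qed.
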